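(* Let $G=(V,E)$ be a simple undirected graph and let $E'\subseteq E^c$ be such that $G+E'$ is not chordal and $G+(E'\setminus\{f\})$ is chordal for every $f\in E'$. If $ax\ge b$ is facet-defining for $\textnormal{conv}(X(G+E'))$ with $a\ge 0$, and $a'\in\mathbb{R}^{E^c}$ is given by $a'_f=a_f$ if $f\in E^c\setminus E'$ and $a'_f=0$ otherwise, then the inequality $$a'x\ \ge\ b\Big(\sum_{f\in E'}x_f-|E'|+1\Big)$$ is facet-defining for $\textnormal{conv}(X(G))$.
   Context: For a graph $H=(V_H,E_H)$, $E^c(H)=\binom{V_H}{2}\setminus E_H$ (here $E^c=E^c(G)$, and $E^c(G+E')=E^c\setminus E'$); $H+F=(V_H,E_H\cup F)$. For $x\in\{0,1\}^{E^c(H)}$, $E(x)=\{f:x_f=1\}$ and $X(H)=\{x\in\{0,1\}^{E^c(H)}:(V_H,E_H\cup E(x))\text{ is chordal}\}$; a graph is chordal if every cycle with at least four vertices has a chord. *)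

(* Defs.v *)
From HB Require Import structures.
From mathcomp Require Import all_boot all_order all_algebra.
Set Implicit Arguments. Unset Strict Implicit. Unset Printing Implicit Defensive.
Import Order.TTheory GRing.Theory Num.Theory.
Local Open Scope ring_scope.

(* A simple undirected graph on the finite vertex type V is given by its edge
   set E : {set {set V}}, every edge being a 2-element subset of V. *)

Definition adj (V : finType) (E : {set {set V}}) (u v : V) : bool :=
  (u != v) && ([set u; v] \in E).

Definition is_cycle4 (V : finType) (E : {set {set V}}) (s : seq V) : bool :=
  [&& uniq s, (4 <= size s)%N & cycle (adj E) s].

Definition has_chord (V : finType) (E : {set {set V}}) (s : seq V) : Prop :=
  exists x y, [/\ x \in s, y \in s, adj E x y, y != next s x & x != next s y].

Definition chordal (V : finType) (E : {set {set V}}) : Prop :=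
  forall s : seq V, is_cycle4 E s -> has_chord E s.

Definition Ecomp (V : finType) (E : {set {set V}}) : {set {set V}} :=
  [set e : {set V} | (#|e| == 2) && (e \notin E)].

(* Vectors of R^{E^c(H)} are represented as functions on all subsets of V
   which vanish outside E^c(H) (a coordinate subspace embedding). *)
Notation vec V R := ({ffun {set V} -> R}).

Definition dot (V : finType) (R : numDomainType) (a x : vec V R) : R :=
  \sum_(e : {set V}) a e * x e.

Definition Eof (V : finType) (R : numDomainType) (E : {set {set V}}) (x : vec V R)
  : {set {set V}} := [set e in Ecomp E | x e == 1].

Definition Xset (V : finType) (R : numDomainType) (E : {set {set V}}) (x : vec V R)
  : Prop :=
  [/\ (forall e, e \in Ecomp E -> x e = 0 \/ x e = 1),
      (forall e, e \notin Ecomp E -> x e = 0) &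
      chordal (E :|: Eof E x)].

Definition conv (V : finType) (R : numDomainType) (S : vec V R -> Prop) (x : vec V R)
  : Prop :=
  exists n (p : 'I_n -> vec V R) (l : 'I_n -> R),
    [/\ forall i, S (p i), forall i, 0 <= l i, \sum_i l i = 1 &
        forall e, x e = \sum_i l i * p i e].

Definition aff_indep (V : finType) (R : numDomainType) n (p : 'I_n -> vec V R) : Prop :=
  forall l : 'I_n -> R, \sum_i l i = 0 ->
    (forall e, \sum_i l i * p i e = 0) -> forall i, l i = 0.

(* affrank S k : the maximum number of affinely independent points of S is k
   (so the affine dimension of S is k - 1). *)
Definition affrank (V : finType) (R : numDomainType) (S : vec V R -> Prop) (k : nat)
  : Prop :=
  (exists p : 'I_k -> vec V R, (forall i, S (p i)) /\ aff_indep p) /\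
  (forall m (p : 'I_m -> vec V R), (forall i, S (p i)) -> aff_indep p -> (m <= k)%N).

Definition facet_defining (V : finType) (R : numDomainType) (P : vec V R -> Prop)
  (g h : vec V R -> R) : Prop :=
  (forall x, P x -> h x <= g x) /\
  exists k, affrank P k.+1 /\ affrank (fun x => P x /\ g x = h x) k.

(* Main.v *)
Require Import Defs.
From HB Require Import structures.
From mathcomp Require Import all_boot all_order all_algebra ring lra.
Import Order.TTheory GRing.Theory Num.Theory.
Set Implicit Arguments. Unset Strict Implicit. Unset Printing Implicit Defensive.
Local Open Scope ring_scope.

Lemma count_bound (R : realFieldType) (V : finType) m (p : 'I_m -> vec V R)
  (D : {set {set V}}) :
  (forall l : 'I_m -> R, \sum_i l i = 0 ->
     (forall e, e \in D -> \sum_i l i * p i e = 0) -> forall i, l i = 0) ->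
  (m <= #|D|.+1)%N.
Proof.
move=> H.
pose M : 'M[R]_(m, #|D|.+1) := \matrix_(i, j)
  if unlift ord0 j is Some j' then p i (enum_val j') else 1.
have rf : row_free M.
  apply: inj_row_free => v vM.
  move/matrixP: vM => vM.
  apply/rowP => i; rewrite mxE.
  apply: (H (fun i => v 0 i)).
  - have := vM 0 ord0; rewrite !mxE => E0; apply: etrans E0.
    by apply: eq_bigr => k _; rewrite mxE unlift_none mulr1.
  - move=> e De.
    have := vM 0 (lift ord0 (enum_rank_in De e)).
    rewrite !mxE => E0; apply: etrans E0.
    by apply: eq_bigr => k _; rewrite mxE liftK enum_rankK_in.
have := rank_leq_col M.
by move/eqP: rf => ->.
Qed.

Lemma aff_upper (R : realFieldType) (V : finType) (S : vec V R -> Prop)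
  (D : {set {set V}}) m (p : 'I_m -> vec V R) :
  (forall x, S x -> forall e, e \notin D -> x e = 0) ->
  (forall i, S (p i)) -> aff_indep p -> (m <= #|D|.+1)%N.
Proof.
move=> Hz Sp Hp; apply: (@count_bound R V m p D) => l s0 Hl.
apply: Hp => // e; case: (boolP (e \in D)) => De; first exact: Hl.
by rewrite big1 // => i _; rewrite (Hz _ (Sp i)) // mulr0.
Qed.

Lemma aff_upper_hyp (R : realFieldType) (V : finType) (S : vec V R -> Prop)
  (D : {set {set V}}) m (p : 'I_m -> vec V R) (g : {set V} -> R) c e0 :
  (forall x, S x -> forall e, e \notin D -> x e = 0) ->
  (forall x, S x -> \sum_e g e * x e = c) -> e0 \in D -> g e0 != 0 ->
  (forall i, S (p i)) -> aff_indep p -> (m <= #|D|)%N.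
Proof.
move=> Hz Hg De0 ge0 Sp Hp.
have -> : #|D| = #|D :\ e0|.+1 by rewrite (cardsD1 e0 D) De0.
apply: (@count_bound R V m p (D :\ e0)) => l s0 Hl.
have Hout : forall e, e \notin D -> \sum_i l i * p i e = 0.
  by move=> e De; rewrite big1 // => i _; rewrite (Hz _ (Sp i)) // mulr0.
have He0 : \sum_i l i * p i e0 = 0.
  have : \sum_i l i * c = 0 by rewrite -mulr_suml s0 mul0r.
  have -> : \sum_i l i * c = \sum_e g e * \sum_i l i * p i e.
    rewrite (eq_bigr (fun i => \sum_e l i * (g e * p i e))); last first.
      by move=> i _; rewrite -(Hg _ (Sp i)) mulr_sumr.
    rewrite exchange_big /=; apply: eq_bigr => e _; rewrite mulr_sumr.
    by apply: eq_bigr => i _; rewrite mulrCA.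
  have -> : \sum_e g e * \sum_i l i * p i e = g e0 * \sum_i l i * p i e0.
    rewrite (bigD1 e0) //= [X in _ + X]big1 ?addr0 //.
    move=> e ne0; case: (boolP (e \in D)) => De.
      by rewrite Hl ?mulr0 // in_setD1 ne0.
    by rewrite Hout ?mulr0.
  by move=> /eqP; rewrite mulf_eq0 (negPf ge0) /= => /eqP.
apply: Hp => // e; case: (boolP (e \in D)) => De; last exact: Hout.
case: (eqVneq e e0) => [->//|ne].
by apply: Hl; rewrite in_setD1 ne.
Qed.

Lemma extend_indep (R : realFieldType) (V : finType) m n
  (z : 'I_(m + n) -> vec V R) (c : 'I_n -> {set V}) :
  (forall j j0, z (lshift n j) (c j0) = 1) ->
  (forall j j0, z (rshift m j) (c j0) = if j == j0 then 0 else 1) ->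
  (forall j e, (forall j0, e != c j0) -> z (rshift m j) e = 0) ->
  (forall l : 'I_m -> R, \sum_j l j = 0 ->
     (forall e, (forall j0, e != c j0) -> \sum_j l j * z (lshift n j) e = 0) ->
     forall j, l j = 0) ->
  aff_indep z.
Proof.
move=> H1 H2 H3 Hb l s0 Hl.
have sp := s0; rewrite big_split_ord /= in sp.
have Hr : forall j0, l (rshift m j0) = 0.
  move=> j0; have := Hl (c j0); rewrite big_split_ord /=.
  rewrite (eq_bigr (fun j => l (lshift n j))); last by move=> j _; rewrite H1 mulr1.
  rewrite (bigD1 j0) //= H2 eqxx mulr0 add0r.
  rewrite (eq_bigr (fun j => l (rshift m j))); last first.
    by move=> j /negPf nj; rewrite H2 nj mulr1.
  move: sp; rewrite (bigD1 j0) //= => sp.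
  move=> HH; lra.
have Hl' : forall j, l (lshift n j) = 0.
  apply: Hb.
    by move: sp; rewrite [X in _ + X]big1 ?addr0 // => j _; apply: Hr.
  move=> e He; have := Hl e; rewrite big_split_ord /= [X in _ + X]big1 ?addr0 //.
  by move=> j _; rewrite Hr mul0r.
move=> i; case: (splitP i) => j ij.
  by have -> : i = lshift n j by apply: val_inj.
by have -> : i = rshift m j by apply: val_inj.
Qed.

Lemma complete_chordal (V : finType) (F : {set {set V}}) (f : {set V}) :
  (forall e : {set V}, #|e| = 2 -> e != f -> e \in F)%N -> chordal F.
Proof.
move=> HF s; rewrite /is_cycle4 => /and3P [us ss _].
case: s us ss => [|y0 [|y1 [|y2 [|y3 r]]]] //= us _.
move: us => /and5P [u0 u1 u2 _ _].
rewrite !inE !negb_or in u0 u1 u2.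
case/and4P: u0 => n01 n02 n03 n0r.
case/and3P: u1 => n12 n13 n1r.
case/andP: u2 => n23 _.
have ad : forall u v, u != v -> [set u; v] != f -> adj F u v.
  by move=> u v uv uvf; rewrite /adj uv HF // cards2 uv.
case: (eqVneq [set y0; y2] f) => [E02 | n02f].
  exists y1, y3; split; rewrite ?inE ?eqxx ?orbT //.
  - apply: ad => //; apply/negP => /eqP E13.
    have : y1 \in [set y0; y2] by rewrite E02 -E13 !inE eqxx.
    by rewrite !inE (negPf n12) eq_sym (negPf n01).
  - by rewrite /next /= (eq_sym y1 y0) (negPf n01) /= eqxx eq_sym.
  - rewrite /next /= (eq_sym y3 y0) (negPf n03) /= (eq_sym y3 y1) (negPf n13) /= (eq_sym y3 y2) (negPf n23) /=.
    case: r n0r n1r => [|z r'] /= n0r n1r; rewrite eqxx; first by rewrite eq_sym.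
    by apply/eqP => E; move: n1r; rewrite E inE eqxx.
exists y0, y2; split; rewrite ?inE ?eqxx ?orbT //.
- exact: ad.
- by rewrite /next /= eqxx /= eq_sym.
- by rewrite /next /= (eq_sym y2 y0) (negPf n02) /= (eq_sym y2 y1) (negPf n12) /= eqxx.
Qed.

Section G.
Variables (R : realFieldType) (V : finType).

Lemma conv1 (S : vec V R -> Prop) x : S x -> conv S x.
Proof.
move=> Sx; exists 1%N, (fun _ => x), (fun _ => 1); split => //.
- by rewrite big_ord1.
- by move=> e; rewrite big_ord1 mul1r.
Qed.

Lemma conv_zero (H : {set {set V}}) x : conv (Xset (R:=R) H) x -> forall e, e \notin Ecomp H -> x e = 0.
Proof.
case=> n [p [l [Sp _ _ Hx]]] e He; rewrite Hx big1 // => i _.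
by case: (Sp i) => _ H0 _; rewrite H0 // mulr0.
Qed.

Lemma conv_ge0 (H : {set {set V}}) x : conv (Xset (R:=R) H) x -> forall e, 0 <= x e.
Proof.
case=> n [p [l [Sp l0 _ Hx]]] e; rewrite Hx sumr_ge0 // => i _.
case: (Sp i) => H01 H0 _; apply: mulr_ge0 => //.
case: (boolP (e \in Ecomp H)) => He; last by rewrite H0.
by case: (H01 _ He) => ->.
Qed.

Definition enumD (D : {set {set V}}) (j : 'I_#|D|) : {set V} := enum_val j.

Arguments enumD : clear implicits.

Lemma enumD_in (D : {set {set V}}) j : enumD D j \in D.
Proof. exact: enum_valP. Qed.

Lemma enumD_inj (D : {set {set V}}) : injective (enumD D).
Proof. exact: enum_val_inj. Qed.

Lemma enumD_onto (D : {set {set V}}) e : e \in D -> exists j, e = enumD D j.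
Proof. by move=> De; exists (enum_rank_in De e); rewrite /enumD enum_rankK_in. Qed.

Definition onesm (H : {set {set V}}) (g : {set V}) : vec V R :=
  [ffun e => if (e \in Ecomp H) && (e != g) then 1 else 0].

Lemma onesm_X (H : {set {set V}}) g : (forall e, e \in H -> #|e| = 2)%N -> Xset H (onesm H g).
Proof.
move=> HH; split.
- by move=> e He; rewrite ffunE He /=; case: (e != g); [right|left].
- by move=> e He; rewrite ffunE (negPf He).
apply: (@complete_chordal V _ g) => e ce eg.
rewrite inE; case: (boolP (e \in H)) => //= eH.
have eC : e \in Ecomp H by rewrite inE ce eqxx eH.
by rewrite inE eC ffunE eC eg /= eqxx.
Qed.


Lemma split_l m n (j : 'I_m) : split (lshift n j) = inl j.
Proof. exact: (unsplitK (inl _ j)). Qed.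
Lemma split_r m n (j : 'I_n) : split (rshift m j) = inr j.
Proof. exact: (unsplitK (inr _ j)). Qed.

Lemma lower_X (H : {set {set V}}) : (forall e, e \in H -> #|e| = 2)%N ->
  exists p : 'I_(1 + #|Ecomp H|) -> vec V R,
    (forall i, conv (Xset H) (p i)) /\ aff_indep p.
Proof.
move=> HH.
pose z (i : 'I_(1 + #|Ecomp H|)) := onesm H
  (match split i with inl _ => set0 | inr j => enumD (Ecomp H) j end).
have s0 : set0 \notin Ecomp H by rewrite inE cards0.
exists z; split; first by move=> i; apply: conv1; apply: onesm_X.
apply: (@extend_indep R V 1 _ z (enumD (Ecomp H))).
- move=> j j0; rewrite /z split_l ffunE enumD_in /=.
  case: eqP => // E; by move: s0; rewrite -E enumD_in.
- move=> j j0; rewrite /z split_r ffunE enumD_in /= (inj_eq (@enumD_inj _)) eq_sym.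
  by case: (j == j0).
- move=> j e He; rewrite /z split_r ffunE.
  case: (boolP (e \in Ecomp H)) => //= eC.
  by case: (enumD_onto eC) => j0 E; move: (He j0); rewrite E eqxx.
by move=> l; rewrite big_ord1 => l0 _ j; rewrite (ord1 j).
Qed.

Variables (E E' : {set {set V}}).
Hypothesis sE' : E' \subset Ecomp E.

Lemma Ecomp_U : Ecomp (E :|: E') = Ecomp E :\: E'.
Proof.
apply/setP => e; rewrite !inE.
case: (e \in E'); by rewrite /= ?orbF ?orbT ?andbF.
Qed.

Definition liftv (q : vec V R) : vec V R := [ffun e => if e \in E' then 1 else q e].
Definition restr (p : vec V R) : vec V R := [ffun e => if e \in E' then 0 else p e].
Definition ym (f : {set V}) : vec V R :=
  [ffun e => if (e \in E') && (e != f) then 1 else 0].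

Lemma lift_X q : Xset (E :|: E') q -> Xset E (liftv q).
Proof.
case=> H01 H0 Hc; split.
- move=> e eC; rewrite ffunE; case: ifP => eE'; first by right.
  by apply: H01; rewrite Ecomp_U inE eE'.
- move=> e eC; rewrite ffunE; case: ifP => eE'.
    by move: eC; rewrite (subsetP sE' e eE').
  by apply: H0; rewrite Ecomp_U inE eE'.
suff -> : E :|: Eof E (liftv q) = (E :|: E') :|: Eof (E :|: E') q by [].
apply/setP => e; rewrite /Eof !inE /liftv ffunE.
case eE': (e \in E') => /=; last by rewrite orbF.
by rewrite !orbT; have := subsetP sE' e eE'; rewrite inE => /andP [-> ->]; rewrite eqxx orbT.
Qed.

Lemma restr_X p : Xset E p -> (forall f, f \in E' -> p f = 1) ->
  Xset (E :|: E') (restr p).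
Proof.
case=> H01 H0 Hc H1; split.
- move=> e; rewrite Ecomp_U inE => /andP [eE' eC]; rewrite ffunE (negPf eE').
  exact: H01.
- move=> e; rewrite Ecomp_U inE negb_and negbK ffunE => /orP [->//|eC].
  by case: ifP => // _; apply: H0.
suff <- : E :|: Eof E p = (E :|: E') :|: Eof (E :|: E') (restr p) by [].
apply/setP => e; rewrite /Eof !inE /restr ffunE.
case eE': (e \in E') => /=; last by rewrite orbF.
by rewrite !orbT; have := subsetP sE' e eE'; rewrite inE => /andP [-> ->]; rewrite H1 // eqxx orbT.
Qed.

Lemma ym_X f : f \in E' -> chordal (E :|: (E' :\ f)) -> Xset E (ym f).
Proof.
move=> fE' Hc; split.
- by move=> e _; rewrite ffunE; case: ifP; [right|left].
- move=> e eC; rewrite ffunE; case: ifP => // /andP [eE' _].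
  by move: eC; rewrite (subsetP sE' e eE').
suff -> : E :|: Eof E (ym f) = E :|: (E' :\ f) by [].
apply/setP => e; rewrite /Eof !inE /ym ffunE.
have h2 : e \in E' -> (#|e| == 2) && (e \notin E) by move=> /(subsetP sE'); rewrite inE.
have z1 : (0 == 1 :> R) = false by rewrite eq_sym oner_eq0.
move: h2; case: (e \in E) (e == f) (e \in E') => [] [] [] /= h2; rewrite ?eqxx ?z1 ?andbF //.
by rewrite h2.
Qed.

End G.
Arguments ym {R V} E' f.
Arguments enumD : clear implicits.
Arguments enumD {V} D j.

Lemma affine_comb (R : realFieldType) n (l s : 'I_n -> R) (b c : R) :
  \sum_i l i = 1 -> \sum_i l i * (b * (s i - c + 1)) = b * (\sum_i l i * s i - c + 1).
Proof.
move=> l1.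
rewrite (eq_bigr (fun i => b * (l i * s i) + (b * (1 - c)) * l i)); last first.
  by move=> i _; ring.
by rewrite big_split /= -!mulr_sumr l1; ring.
Qed.

Lemma comb_lin (R : realFieldType) (V : finType) n (l : 'I_n -> R) (p : 'I_n -> vec V R)
  (w : {set V} -> R) (A : pred {set V}) :
  \sum_(e in A) w e * \sum_i l i * p i e = \sum_i l i * \sum_(e in A) w e * p i e.
Proof.
rewrite (eq_bigr (fun e => \sum_i l i * (w e * p i e))); last first.
  by move=> e _; rewrite mulr_sumr; apply: eq_bigr => i _; rewrite mulrCA.
by rewrite exchange_big /=; apply: eq_bigr => i _; rewrite mulr_sumr.
Qed.

Section H.
Variables (R : realFieldType) (V : finType) (E E' : {set {set V}}) (a : vec V R) (b : R).
Hypothesis sE' : E' \subset Ecomp E.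

Definition aP : vec V R := [ffun f => if f \in Ecomp E :\: E' then a f else 0].

Lemma inE'_notC e : e \in E' -> e \notin Ecomp (E :|: E').
Proof. by move=> eE'; rewrite (Ecomp_U E E') inE eE'. Qed.

Lemma dot_lift x : conv (Xset (E :|: E')) x -> dot aP (liftv E' x) = dot a x.
Proof.
move=> cx; apply: eq_bigr => e _; rewrite /aP /liftv !ffunE inE.
case: (boolP (e \in E')) => eE' /=.
  by rewrite (conv_zero cx (inE'_notC eE')) mul0r mulr0.
case: ifP => // eC.
by rewrite (conv_zero cx) ?mulr0 // (Ecomp_U E E') inE eC andbF.
Qed.

Lemma conv_lift (x : vec V R) : conv (Xset (E :|: E')) x -> conv (Xset E) (liftv E' x).
Proof.
case=> n [p [l [Sp l0 l1 Hx]]].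
exists n, (fun i => liftv E' (p i)), l; split => //.
  by move=> i; apply: lift_X.
move=> e; rewrite /liftv ffunE; case: ifP => eE'.
  by rewrite -{1}l1; apply: eq_bigr => i _; rewrite ffunE eE' mulr1.
by rewrite Hx; apply: eq_bigr => i _; rewrite ffunE eE'.
Qed.

Lemma sum_lift (x : vec V R) : \sum_(f in E') liftv E' x f = #|E'|%:R.
Proof.
by rewrite (eq_bigr (fun _ => 1)) ?sumr_const // => f fE'; rewrite ffunE fE'.
Qed.

Lemma dot_ym (f : {set V}) : dot aP (ym E' f) = 0.
Proof.
rewrite /dot big1 // => e _; rewrite /aP /ym !ffunE inE.
by case: (e \in E') => /=; rewrite ?mul0r ?mulr0.
Qed.

Lemma sum_ym f : f \in E' -> \sum_(e in E') (ym E' f : vec V R) e = #|E'|%:R - 1.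
Proof.
move=> fE'.
rewrite (eq_bigr (fun e => 1 - (e == f)%:R)); last first.
  by move=> e eE'; rewrite ffunE eE' /=; case: (e == f); rewrite ?subr0 ?subrr.
rewrite sumrB sumr_const (bigD1 f) //= eqxx big1 ?addr0 //.
by move=> e /andP [_ /negPf ->].
Qed.

Lemma val_pt p :
  (forall x, conv (Xset (E :|: E')) x -> b <= dot a x) -> 0 <= b ->
  (forall f, f \in Ecomp (E :|: E') -> 0 <= a f) ->
  Xset E p -> b * (\sum_(f in E') p f - #|E'|%:R + 1) <= dot aP p.
Proof.
move=> val b0 a0 Xp.
have p01 : forall e, e \in Ecomp E -> p e = 0 \/ p e = 1 by case: Xp.
case: (boolP [forall f in E', p f == 1]) => [/forall_inP H1 | ].
  have H1' : forall f, f \in E' -> p f = 1 by move=> f /H1 /eqP.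
  have -> : \sum_(f in E') p f = #|E'|%:R.
    by rewrite (eq_bigr (fun _ => 1)) ?sumr_const.
  rewrite subrr add0r mulr1.
  have -> : dot aP p = dot a (restr E' p).
    apply: eq_bigr => e _; rewrite /aP /restr !ffunE inE.
    case: (boolP (e \in E')) => eE' /=; first by rewrite mul0r mulr0.
    case: ifP => // eC2; case: Xp => _ H0 _.
    by rewrite H0 ?eC2 // !mulr0.
  by apply: val; apply: conv1; apply: restr_X.
move=> /forall_inPn [f fE' pf].
have pf0 : p f = 0.
  by case: (p01 f (subsetP sE' f fE')) => // E1; move: pf; rewrite E1 eqxx.
have p1 : forall e, p e <= 1.
  move=> e; case: (boolP (e \in Ecomp E)) => eC; first by case: (p01 e eC) => ->.
  by case: Xp => _ H0 _; rewrite H0.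
have p0 : forall e, 0 <= p e.
  move=> e; case: (boolP (e \in Ecomp E)) => eC; first by case: (p01 e eC) => ->.
  by case: Xp => _ H0 _; rewrite H0.
have Hs : \sum_(e in E') p e <= #|E'|%:R - 1.
  have -> : \sum_(e in E') p e = \sum_(e in E') 1 - \sum_(e in E') (1 - p e).
    by rewrite -sumrB; apply: eq_bigr => e _; ring.
  rewrite sumr_const lerD2l lerN2 (bigD1 f) //= pf0 subr0 lerDl.
  by apply: sumr_ge0 => e _; rewrite subr_ge0.
apply: (@le_trans _ _ 0).
  by rewrite mulr_ge0_le0 //; lra.
apply: sumr_ge0 => e _; rewrite /aP ffunE; case: ifP => eC; last by rewrite mul0r.
by apply: mulr_ge0 => //; apply: a0; rewrite (Ecomp_U E E').
Qed.

End H.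

Unset Implicit Arguments.

Theorem mainTheorem14 (R : realFieldType) (V : finType) (E E' : {set {set V}})
  (a : {ffun {set V} -> R}) (b : R) :
  (forall e, e \in E -> #|e| = 2)%N ->
  E' \subset Ecomp E ->
  ~ chordal (E :|: E') ->
  (forall f, f \in E' -> chordal (E :|: (E' :\ f))) ->
  facet_defining (conv (Xset (R:=R) (E :|: E'))) (dot a) (fun _ => b) ->
  (forall f, f \in Ecomp (E :|: E') -> 0 <= a f) ->
  let a' : {ffun {set V} -> R} :=
    [ffun f => if f \in Ecomp E :\: E' then a f else 0] in
  facet_defining (conv (Xset (R:=R) E)) (dot a')
    (fun x => b * (\sum_(f in E') x f - #|E'|%:R + 1)).
Proof.
move=> H2 sE' nch minE' [val [k [[[P1 [SP1 iP1]] upP] [[F1 [SF1 iF1]] upF]]]] a0 a'.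
have -> : a' = aP E E' a by [].
set D1 := Ecomp (E :|: E').
have H2U : forall e, e \in E :|: E' -> #|e| = 2.
  move=> e; rewrite inE => /orP [/H2 //|/(subsetP sE')].
  by rewrite inE => /andP [/eqP].
have kd : k = #|D1|.
  apply/eqP; rewrite eqn_leq; apply/andP; split.
    have := @aff_upper R V _ D1 _ P1 (fun x cx => conv_zero cx) SP1 iP1.
    by [].
  have [p [Sp ip]] := lower_X R H2U.
  exact: (upP _ p Sp ip).
subst k.
have d1 : (0 < #|D1|)%N.
  rewrite lt0n; apply/negP => /eqP /cards0_eq D10; apply: nch.
  apply: (@complete_chordal V _ set0) => e ce _.
  case: (boolP (e \in E :|: E')) => // nU; have : e \in D1 by rewrite inE ce eqxx nU.
  by rewrite D10 inE.
pose x0 := F1 (Ordinal d1).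
have [cx0 ax0] := SF1 (Ordinal d1).
have dotge0 : forall x, conv (Xset (E :|: E')) x -> 0 <= dot a x.
  move=> x cx; apply: sumr_ge0 => e _.
  case: (boolP (e \in D1)) => eD; last by rewrite (conv_zero cx eD) mulr0.
  by apply: mulr_ge0; [apply: a0 | apply: (conv_ge0 cx)].
have b0 : 0 <= b by rewrite -ax0; apply: dotge0.
pose g e := aP E E' a e - (if e \in E' then b else 0).
case: (boolP [exists e0 in Ecomp E, g e0 != 0]); last first.
  move=> /exists_inPn gz; exfalso.
  have aD : forall e, e \in D1 -> a e = 0.
    move=> e; rewrite /D1 (Ecomp_U E E') inE => /andP [eE' eC].
    have := gz e eC; rewrite negbK /g /aP ffunE inE eE' eC (negPf eE') /= subr0.
    by move/eqP.
  have dot0 : forall x, conv (Xset (E :|: E')) x -> dot a x = 0.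
    move=> x cx; rewrite /dot big1 // => e _.
    case: (boolP (e \in D1)) => eD; first by rewrite aD ?mul0r.
    by rewrite (conv_zero cx eD) mulr0.
  case: (eqVneq b 0) => [b00 | bn0].
    have := upF _ P1 (fun i => conj (SP1 i) (etrans (dot0 _ (SP1 i)) (esym b00))) iP1.
    by rewrite ltnn.
  by move: bn0; rewrite -ax0 dot0 ?eqxx.
move=> /exists_inP [e0 e0C ge0].
split.
  move=> x [n [p [l [Sp l0 l1 Hx]]]].
  have Hs : \sum_(f in E') x f = \sum_i l i * \sum_(f in E') p i f.
    rewrite (eq_bigr (fun f => 1 * \sum_i l i * p i f)); last by move=> f _; rewrite Hx mul1r.
    rewrite comb_lin; apply: eq_bigr => i _; congr (_ * _); apply: eq_bigr => f _.
    by rewrite mul1r.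
  have Hd : dot (aP E E' a) x = \sum_i l i * dot (aP E E' a) (p i).
    rewrite /dot (eq_bigr (fun e => aP E E' a e * \sum_i l i * p i e)); last first.
      by move=> e _; rewrite Hx.
    have := comb_lin l p (aP E E' a) predT.
    rewrite (eq_bigl (fun e => true)) // => ->.
  rewrite Hs Hd -affine_comb //; apply: ler_sum => i _.
  exact: (ler_wpM2l (l0 i) (val_pt sE' val b0 a0 (Sp i))).
exists #|Ecomp E|; split.
  split.
    by have [p [Sp ip]] := lower_X R H2; exists p.
  by move=> m p Sp ip; exact: (aff_upper (D:=Ecomp E) (fun x cx => conv_zero cx) Sp ip).
split; last first.
  move=> m p Sp ip.
  apply: (aff_upper_hyp (S := fun x => conv (Xset E) x /\ dot (aP E E' a) x = b * (\sum_(f in E') x f - #|E'|%:R + 1)) (D:=Ecomp E) (g:=g) (c:=b*(1 - #|E'|%:R)) (e0:=e0) _ _ e0C ge0 Sp ip).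
    by move=> x [cx _]; exact: conv_zero cx.
  move=> x [cx ex].
  have -> : \sum_e g e * x e = dot (aP E E' a) x - b * \sum_(f in E') x f.
    rewrite /g /dot (eq_bigr (fun e => aP E E' a e * x e - (if e \in E' then b * x e else 0))); last first.
      by move=> e _; case: ifP => _; ring.
    by rewrite sumrB -big_mkcond /= mulr_sumr.
  by rewrite ex; ring.
have cardE : #|Ecomp E| = (#|D1| + #|E'|)%N.
  by rewrite /D1 (Ecomp_U E E') cardsD (setIidPr sE') subnK // subset_leq_card.
rewrite cardE.
pose z (i : 'I_(#|D1| + #|E'|)) := match split i with
  | inl j => liftv E' (F1 j) | inr j => ym E' (enumD E' j) end.
exists z; split.
  move=> i; rewrite /z; case: (split i) => j.
    have [c1 e1] := SF1 j; split; first exact: conv_lift.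
    by rewrite dot_lift // sum_lift e1; ring.
  split; first by apply: conv1; apply: ym_X => //; [apply: enumD_in | apply: minE'; apply: enumD_in].
  by rewrite dot_ym sum_ym ?enumD_in //; ring.
apply: (@extend_indep R V _ _ z (enumD E')).
- by move=> j j0; rewrite /z split_l /liftv ffunE enumD_in.
- move=> j j0; rewrite /z split_r /ym ffunE enumD_in /= (inj_eq (@enumD_inj _ _)) eq_sym.
  by case: (j == j0).
- move=> j e He; rewrite /z split_r /ym ffunE.
  case: (boolP (e \in E')) => //= eE'.
  by case: (enumD_onto eE') => j0 Ej; move: (He j0); rewrite Ej eqxx.
move=> l sl Hl; apply: iF1 => // e; case: (boolP (e \in E')) => eE'.
  by rewrite big1 // => j _; rewrite (conv_zero (SF1 j).1 (inE'_notC E eE')) mulr0.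
rewrite -[RHS](Hl e); last first.
  by move=> j0; apply: contraNneq eE' => ->; apply: enumD_in.
by apply: eq_bigr => j _; rewrite /z split_l /liftv ffunE (negPf eE').
Qed.
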